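(* Let $d\ge2$ and $\alpha>0$. The map $F_\alpha:\mathbf{Sym}_d^+\to\mathbb{R}^+$, $F_\alpha(A)=(\det A)^\alpha$, is $\Lambda$-concave if and only if $\alpha\le\frac1{d-1}$.
   Context: $\mathbf{Sym}_d^+$ is the cone of real symmetric positive semi-definite $d\times d$ matrices. A function $F:\mathbf{Sym}_d^+\to\mathbb{R}$ is called $\Lambda$-concave if for all $B,C\in\mathbf{Sym}_d^+$ with $\det(C-B)=0$, the restriction of $F$ to the segment $[B,C]$ is concave, i.e. $t\mapsto F((1-t)B+tC)$ is concave on $[0,1]$. *)

(* Defs.v *)
From mathcomp Require Import all_boot all_order all_algebra.
From mathcomp Require Import all_classical all_reals all_analysis.
Set Implicit Arguments. Unset Strict Implicit. Unset Printing Implicit Defensive.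
Import Order.TTheory GRing.Theory Num.Theory.
Local Open Scope ring_scope.

Definition psd (R : realType) (d : nat) (A : 'M[R]_d) : Prop :=
  A^T = A /\ forall v : 'cV[R]_d, 0 <= (v^T *m A *m v) 0 0.

Definition concave_on01 (R : realType) (g : R -> R) : Prop :=
  forall s t l : R, 0 <= s <= 1 -> 0 <= t <= 1 -> 0 <= l <= 1 ->
    (1 - l) * g s + l * g t <= g ((1 - l) * s + l * t).

(* Lambda-concavity of F : Sym_d^+ -> R (F given on all matrices, only its
   values on Sym_d^+ matter since segments between PSD matrices stay PSD). *)
Definition Lambda_concave (R : realType) (d : nat) (F : 'M[R]_d -> R) : Prop :=
  forall B C : 'M[R]_d, psd B -> psd C -> \det (C - B) = 0 ->
    concave_on01 (fun t => F ((1 - t) *: B + t *: C)).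

Definition F_alpha (R : realType) (d : nat) (alpha : R) (A : 'M[R]_d) : R :=
  powR (\det A) alpha.

(* Main.v *)
Require Import Defs.
From mathcomp Require Import all_boot all_order all_algebra.
From mathcomp Require Import all_classical all_reals all_analysis.
From mathcomp Require Import all_field complex polyrcf perm.
From mathcomp Require Import ring lra.
Import Order.TTheory GRing.Theory Num.Theory.
Local Open Scope ring_scope.

Section Ineq.
Variable R : realType.
Implicit Types (x y a : R).

Lemma young2 x y a : 0 <= x -> 0 <= y -> 0 <= a <= 1 ->
  x `^ a * y `^ (1 - a) <= a * x + (1 - a) * y.
Proof.
move=> x0 y0 /andP[a0 a1].
have [->|a0'] := eqVneq a 0.
  rewrite powRr0 subr0 (powRr1 y0); lra.
have [->|a1'] := eqVneq a 1.
  rewrite (powRr1 x0) subrr powRr0; lra.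
have ap : 0 < a by rewrite lt_def a0' a0.
have aq : 0 < 1 - a by rewrite subr_gt0 lt_def eq_sym a1' a1.
have ia : 0 < a^-1 by rewrite invr_gt0.
have iq : 0 < (1 - a)^-1 by rewrite invr_gt0.
have := @conjugate_powR R (x `^ a) (y `^ (1 - a)) a^-1 (1 - a)^-1
  (powR_ge0 _ _) (powR_ge0 _ _) ia iq.
rewrite !invrK addrC subrK => /(_ erefl).
rewrite -!powRrM !mulfV ?gt_eqF // !powRr1 //.
by rewrite [_ * a]mulrC [_ * (1 - a)]mulrC.
Qed.

Lemma powR_prod (I : Type) (r : seq I) (F : I -> R) a :
  (forall i, 0 <= F i) -> (\prod_(i <- r) F i) `^ a = \prod_(i <- r) F i `^ a.
Proof.
move=> F0; elim: r => [|i r IH]; first by rewrite !big_nil powR1.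
rewrite !big_cons powRM ?IH //; apply: prodr_ge0 => j _; exact: F0.
Qed.

Lemma amgm (I : Type) (r : seq I) (F : I -> R) a :
  (forall i, 0 <= F i) -> 0 <= a -> (size r)%:R * a <= 1 ->
  \prod_(i <- r) F i `^ a <= a * \sum_(i <- r) F i + (1 - (size r)%:R * a).
Proof.
move=> F0; elim: r a => [|i r IH] a a0 ra.
  by rewrite !big_nil mul0r subr0 mulr0 add0r.
rewrite big_cons big_cons /=.
have [a1|a1] := eqVneq a 1.
  move: ra; rewrite a1 mulr1 -natr1 => ra.
  have r0 : size r = 0%N.
    have : (size r)%:R <= (0%N)%:R :> R by lra.
    by rewrite ler_nat leqn0 => /eqP.
  case: r r0 {IH ra} => // _.
  rewrite !big_nil (powRr1 (F0 i)) mulr1 addr0; lra.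
have a1' : a < 1.
  rewrite lt_def eq_sym a1 /=; move: ra; rewrite -natr1 mulrDl mul1r.
  have : 0 <= (size r)%:R * a by apply: mulr_ge0.
  lra.
have aq : 0 < 1 - a by rewrite subr_gt0.
set a' := a / (1 - a).
have a'0 : 0 <= a' by apply: divr_ge0 => //; apply: ltW.
have ra' : (size r)%:R * a' <= 1.
  rewrite /a' mulrA ler_pdivrMr // mul1r; move: ra; rewrite -natr1 mulrDl mul1r.
  lra.
have := IH a' a'0 ra'.
set Q := \prod_(j <- r) F j `^ a'.
have Q0 : 0 <= Q by apply: prodr_ge0 => j _; exact: powR_ge0.
have -> : \prod_(j <- r) F j `^ a = Q `^ (1 - a).
  rewrite /Q powR_prod; last by move=> j; exact: powR_ge0.
  apply: eq_bigr => j _.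
  by rewrite -powRrM /a' -mulrA mulVf ?gt_eqF // mulr1.
move=> HQ.
have Y := @young2 (F i) Q a (F0 i) Q0 (ltac:(by rewrite a0 (ltW a1'))).
apply: (le_trans Y).
have : (1 - a) * Q <= (1 - a) * (a' * \sum_(j <- r) F j + (1 - (size r)%:R * a')).
  by rewrite ler_pM2l.
have -> : (1 - a) * (a' * \sum_(j <- r) F j + (1 - (size r)%:R * a'))
   = a * \sum_(j <- r) F j + (1 - a) - (size r)%:R * a.
  rewrite /a'; field; by rewrite gt_eqF.
rewrite -natr1; lra.
Qed.

Lemma sum1_seqR (I : Type) (r : seq I) : \sum_(i <- r) (1 : R) = (size r)%:R.
Proof. by elim: r => [|i r IH]; rewrite ?big_nil ?big_cons ?IH // -natr1 addrC. Qed.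

Lemma holder (I : eqType) (r : seq I) (f g : I -> R) a l :
  (forall i, 0 <= f i) -> (forall i, 0 <= g i) -> 0 < a ->
  (size r)%:R * a <= 1 -> 0 <= l <= 1 ->
  (1 - l) * \prod_(i <- r) f i `^ a + l * \prod_(i <- r) g i `^ a
  <= \prod_(i <- r) ((1 - l) * f i + l * g i) `^ a.
Proof.
move=> f0 g0 a0 ra /andP[l0 l1].
have [->|l0'] := eqVneq l 0.
  rewrite subr0 mul1r mul0r addr0; rewrite le_eqVlt; apply/orP; left; apply/eqP; apply: eq_bigr => i _.
  by rewrite mul1r mul0r addr0.
have [->|l1'] := eqVneq l 1.
  rewrite subrr mul1r mul0r add0r; rewrite le_eqVlt; apply/orP; left; apply/eqP; apply: eq_bigr => i _.
  by rewrite mul1r mul0r add0r.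
have lp : 0 < l by rewrite lt_def l0' l0.
have lq : 0 < 1 - l by rewrite subr_gt0 lt_def eq_sym l1' l1.
set w := fun i => (1 - l) * f i + l * g i.
have w0 i : 0 <= w i by rewrite /w addr_ge0 // mulr_ge0 // ltW.
have [/hasP[i ir /eqP wi]|/hasPn wn0] := boolP (has (fun i => w i == 0) r).
  have fi : f i = 0.
    have := f0 i; have := g0 i; move: wi; rewrite /w => wi gi fi.
    have h1 : 0 <= (1 - l) * f i by rewrite mulr_ge0 // ltW.
    have h2 : 0 <= l * g i by rewrite mulr_ge0 // ltW.
    have : (1 - l) * f i = 0 by lra.
    by move/eqP; rewrite mulf_eq0 gt_eqF //= => /eqP.
  have gi : g i = 0.
    have := f0 i; have := g0 i; move: wi; rewrite /w => wi gi' fi'.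
    have h1 : 0 <= (1 - l) * f i by rewrite mulr_ge0 // ltW.
    have h2 : 0 <= l * g i by rewrite mulr_ge0 // ltW.
    have : l * g i = 0 by lra.
    by move/eqP; rewrite mulf_eq0 gt_eqF //= => /eqP.
  have -> : \prod_(i <- r) f i `^ a = 0.
    apply/eqP; rewrite prodf_seq_eq0; apply/hasP; exists i => //.
    by rewrite /= fi powR0 ?eqxx // gt_eqF.
  have -> : \prod_(i <- r) g i `^ a = 0.
    apply/eqP; rewrite prodf_seq_eq0; apply/hasP; exists i => //.
    by rewrite /= gi powR0 ?eqxx // gt_eqF.
  rewrite !mulr0 addr0; apply: prodr_ge0 => j _; exact: powR_ge0.
have wp i : i \in r -> 0 < w i by move=> ir; rewrite lt_def wn0 ?w0.
set u := fun i => f i / w i.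
set v := fun i => g i / w i.
have u0 i : 0 <= u i by rewrite /u divr_ge0.
have v0 i : 0 <= v i by rewrite /v divr_ge0.
set W := \prod_(i <- r) w i `^ a.
have W0 : 0 <= W by apply: prodr_ge0 => j _; exact: powR_ge0.
have -> : \prod_(i <- r) f i `^ a = \prod_(i <- r) u i `^ a * W.
  rewrite /W -big_split /=; apply: eq_big_seq => i ir.
  by rewrite -powRM // /u divfK // gt_eqF // wp.
have -> : \prod_(i <- r) g i `^ a = \prod_(i <- r) v i `^ a * W.
  rewrite /W -big_split /=; apply: eq_big_seq => i ir.
  by rewrite -powRM // /v divfK // gt_eqF // wp.
have Hu := @amgm I r u a u0 (ltW a0) ra.
have Hv := @amgm I r v a v0 (ltW a0) ra.
have Huv : (1 - l) * \sum_(i <- r) u i + l * \sum_(i <- r) v i = (size r)%:R.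
  rewrite !mulr_sumr -big_split -sum1_seqR /=; apply: eq_big_seq => i ir.
  rewrite /u /v !mulrA -mulrDl divff // gt_eqF // wp //.
rewrite !mulrA -mulrDl.
rewrite -[X in _ <= X]mul1r ler_wpM2r //.
have := ler_wpM2l (ltW lq) Hu; have := ler_wpM2l l0 Hv.
set U := \prod_(i <- r) u i `^ a; set V := \prod_(i <- r) v i `^ a.
set Su := \sum_(i <- r) u i; set Sv := \sum_(i <- r) v i.
move: Huv; rewrite -/Su -/Sv => Huv h1 h2.
have : (1 - l) * (a * Su + (1 - (size r)%:R * a)) + l * (a * Sv + (1 - (size r)%:R * a))
  = a * ((1 - l) * Su + l * Sv) + (1 - (size r)%:R * a) by ring.
rewrite Huv => E.
have : a * (size r)%:R + (1 - (size r)%:R * a) = 1 by ring.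
lra.
Qed.

End Ineq.

Set Implicit Arguments. Unset Strict Implicit. Unset Printing Implicit Defensive.

Section Mat.
Variable R : realType.
Variable n : nat.
Implicit Types (M N : 'M[R]_n) (x y z : 'cV[R]_n).

Definition qf M x y : R := (x^T *m M *m y) 0 0.

Lemma qfDr M x y z : qf M x (y + z) = qf M x y + qf M x z.
Proof. by rewrite /qf mulmxDr mxE. Qed.
Lemma qfZr M x y c : qf M x (c *: y) = c * qf M x y.
Proof. by rewrite /qf -scalemxAr mxE. Qed.
Lemma qfDl M x y z : qf M (y + z) x = qf M y x + qf M z x.
Proof. by rewrite /qf linearD /= !mulmxDl mxE. Qed.
Lemma qfZl M x y c : qf M (c *: y) x = c * qf M y x.
Proof. by rewrite /qf linearZ /= -!scalemxAl mxE. Qed.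
Lemma qfDm M N x y : qf (M + N) x y = qf M x y + qf N x y.
Proof. by rewrite /qf mulmxDr mulmxDl mxE. Qed.
Lemma qfZm M x y c : qf (c *: M) x y = c * qf M x y.
Proof. by rewrite /qf -scalemxAr -scalemxAl mxE. Qed.
Lemma qfBm M N x y : qf (M - N) x y = qf M x y - qf N x y.
Proof. by rewrite /qf mulmxBr mulmxBl !mxE. Qed.
Lemma qf_comb M N x t : qf (M + t *: (N - M)) x x = (1 - t) * qf M x x + t * qf N x x.
Proof. rewrite qfDm qfZm qfBm; ring. Qed.
Lemma qf1 x : qf 1%:M x x = (x^T *m x) 0 0.
Proof. by rewrite /qf mulmx1. Qed.

Lemma qf_sym M x y : M^T = M -> qf M x y = qf M y x.
Proof.
move=> sM; rewrite /qf; transitivity ((x^T *m M *m y)^T 0 0); first by rewrite [RHS]mxE.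
by rewrite !trmx_mul trmxK sM mulmxA.
Qed.

Lemma normsq_ge0 x : 0 <= (x^T *m x) 0 0.
Proof.
rewrite mxE; apply: sumr_ge0 => i _; rewrite mxE -expr2; exact: sqr_ge0.
Qed.

Lemma normsq_eq0 x : (x^T *m x) 0 0 = 0 -> x = 0.
Proof.
rewrite mxE => /eqP; rewrite psumr_eq0 => [/allP H|i _]; last first.
  by rewrite mxE -expr2 sqr_ge0.
apply/matrixP => i j; rewrite (ord1 j) !mxE.
have := H i (mem_index_enum _); rewrite mxE -expr2 sqrf_eq0 => /eqP //.
Qed.

Definition psdm M := M^T = M /\ forall x, 0 <= qf M x x.
Definition pdm M := M^T = M /\ forall x, x != 0 -> 0 < qf M x x.

Lemma psd_ker M x : psdm M -> qf M x x = 0 -> M *m x = 0.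
Proof.
move=> [sM pM] qx.
have key y : qf M y x = 0.
  set c := qf M y x; set m := qf M y y.
  have m0 : 0 <= m := pM y.
  set t := (m + 1)^-1.
  have t0 : 0 < t by rewrite invr_gt0; lra.
  have tm : t * m < 1.
    have m1 : 0 < m + 1 by lra.
    by rewrite /t mulrC ltr_pdivrMr // mul1r; lra.
  have := pM (x + (- c * t) *: y).
  rewrite !qfDl !qfDr !qfZl !qfZr qx (@qf_sym M x y sM) -/c -/m => H.
  have H' : 0 <= c ^+ 2 * (t * (t * m - 2)).
    by move: H; rewrite !mulrA; nra.
  have neg : t * (t * m - 2) < 0 by rewrite pmulr_rlt0 //; lra.
  have : c ^+ 2 <= 0.
    by move: H'; rewrite nmulr_lge0.
  by move=> c0; apply/eqP; rewrite -sqrf_eq0 eq_le c0 sqr_ge0.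
have h := key (M *m x).
rewrite /qf in h.
rewrite -mulmxA in h.
exact: normsq_eq0.
Qed.

Lemma det0_ker M : \det M = 0 -> exists2 x : 'cV[R]_n, x != 0 & M *m x = 0.
Proof.
rewrite -det_tr => /eqP /det0P [v v0 vM]; exists v^T.
  by apply: contra v0 => /eqP h; rewrite -[v]trmxK h trmx0.
by rewrite -[M]trmxK -trmx_mul vM trmx0.
Qed.

Lemma ker_det0 M x : x != 0 -> M *m x = 0 -> \det M = 0.
Proof.
move=> x0 Mx; apply/eqP; rewrite -det_tr; apply/det0P; exists x^T.
  by apply: contra x0 => /eqP h; rewrite -[x]trmxK h trmx0.
by rewrite -trmx_mul Mx trmx0.
Qed.

Lemma psd_pd M : psdm M -> \det M != 0 -> pdm M.
Proof.
move=> [sM pM] dM; split => // x x0; rewrite lt_def pM andbT.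
apply: contra dM => /eqP qx; apply/eqP; apply: (@ker_det0 M x x0).
exact: psd_ker.
Qed.

Lemma pd_det M : pdm M -> \det M != 0.
Proof.
move=> [sM pM]; apply/eqP => /det0_ker [x x0 Mx].
by have := pM x x0; rewrite /qf -mulmxA Mx mulmx0 mxE ltxx.
Qed.

Lemma comb_sym M N t : M^T = M -> N^T = N -> (M + t *: (N - M))^T = M + t *: (N - M).
Proof. by move=> sM sN; rewrite linearD linearZ linearB /= sM sN. Qed.

Lemma psd_comb M N t : psdm M -> psdm N -> 0 <= t <= 1 -> psdm (M + t *: (N - M)).
Proof.
move=> [sM pM] [sN pN] /andP[t0 t1]; split; first exact: comb_sym.
move=> x; rewrite qf_comb; have := pM x; have := pN x; nra.
Qed.

End Mat.


Section Cplx.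
Variable R : realType.
Local Notation C := (R[i]).
Local Notation Re := (@complex.Re R).
Local Notation Im := (@complex.Im R).

Lemma ReD (z1 z2 : C) : Re (z1 + z2) = Re z1 + Re z2.
Proof. by case: z1 z2 => [a b] [c e]; simpc. Qed.
Lemma ImD (z1 z2 : C) : Im (z1 + z2) = Im z1 + Im z2.
Proof. by case: z1 z2 => [a b] [c e]; simpc. Qed.
Lemma Re0 : Re (0 : C) = 0. Proof. by []. Qed.
Lemma Im0 : Im (0 : C) = 0. Proof. by []. Qed.

Lemma Re_sum (I : Type) (r : seq I) (F : I -> C) :
  Re (\sum_(i <- r) F i) = \sum_(i <- r) Re (F i).
Proof. by elim: r => [|i r IH]; rewrite ?big_nil ?big_cons ?ReD ?IH. Qed.
Lemma Im_sum (I : Type) (r : seq I) (F : I -> C) :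
  Im (\sum_(i <- r) F i) = \sum_(i <- r) Im (F i).
Proof. by elim: r => [|i r IH]; rewrite ?big_nil ?big_cons ?ImD ?IH. Qed.

Lemma Re_pen (z w : C) (p q : R) :
  Re (z * (p%:C%C + w * q%:C%C)) = Re z * p + (Re z * Re w - Im z * Im w) * q.
Proof. case: z w => [a b] [c e]; rewrite -!complexr0; simpc; rewrite /=; ring. Qed.
Lemma Im_pen (z w : C) (p q : R) :
  Im (z * (p%:C%C + w * q%:C%C)) = Im z * p + (Re z * Im w + Im z * Re w) * q.
Proof. case: z w => [a b] [c e]; rewrite -!complexr0; simpc; rewrite /=; ring. Qed.

Section Pencil.
Variable n : nat.
Implicit Types (M N : 'M[R]_n) (p q r : 'I_n -> R).

Definition Sf M p q := \sum_j (\sum_k p k * M k j) * q j.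

Lemma Slin M N p r q a b :
  \sum_j (\sum_k (p k * M k j + (a * p k + b * r k) * N k j)) * q j
  = Sf M p q + a * Sf N p q + b * Sf N r q.
Proof.
rewrite /Sf !mulr_sumr -!big_split /=; apply: eq_bigr => j _.
rewrite !mulr_suml !mulr_sumr -!big_split /=; apply: eq_bigr => k _; ring.
Qed.

Lemma Ssym M p q : M^T = M -> Sf M p q = Sf M q p.
Proof.
move=> sM; rewrite /Sf.
under eq_bigr => j _ do rewrite mulr_suml.
under [RHS]eq_bigr => j _ do rewrite mulr_suml.
rewrite exchange_big /=; apply: eq_bigr => j _; apply: eq_bigr => k _.
have -> : M j k = M k j by rewrite -[in LHS]sM mxE.
ring.
Qed.

Lemma S_qf M p : Sf M p p = qf M (\col_k p k) (\col_k p k).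
Proof.
rewrite /qf /Sf !mxE; apply: eq_bigr => j _; rewrite !mxE; congr (_ * _).
by apply: eq_bigr => k _; rewrite !mxE.
Qed.

Lemma qf0 M : qf M 0 0 = 0.
Proof. by rewrite /qf mulmx0 mxE. Qed.

Lemma pencil_real (A D : 'M[R]_n) (w : C) : pdm A -> D^T = D -> Im w != 0 ->
  \det (map_mx (real_complex R) A + w *: map_mx (real_complex R) D) != 0.
Proof.
move=> [sA pA] sD w0; apply/negP => /det0P [u u0 uM].
set x := fun k => Re (u 0 k); set y := fun k => Im (u 0 k).
have E j : \sum_k u 0 k * ((A k j)%:C%C + w * (D k j)%:C%C) = 0.
  move/matrixP: uM => /(_ 0 j); rewrite !mxE => h; rewrite -[RHS]h.
  by apply: eq_bigr => k _; rewrite !mxE.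
have E1 j : \sum_k (x k * A k j + (Re w * x k + (- Im w) * y k) * D k j) = 0.
  have := congr1 Re (E j); rewrite Re_sum Re0 => h; rewrite -[RHS]h.
  by apply: eq_bigr => k _; rewrite Re_pen /x /y; ring.
have E2 j : \sum_k (y k * A k j + (Re w * y k + Im w * x k) * D k j) = 0.
  have := congr1 Im (E j); rewrite Im_sum Im0 => h; rewrite -[RHS]h.
  by apply: eq_bigr => k _; rewrite Im_pen /x /y; ring.
have z1 q : \sum_j (\sum_k (x k * A k j + (Re w * x k + (- Im w) * y k) * D k j)) * q j = 0.
  by apply: big1 => j _; rewrite E1 mul0r.
have z2 q : \sum_j (\sum_k (y k * A k j + (Re w * y k + Im w * x k) * D k j)) * q j = 0.
  by apply: big1 => j _; rewrite E2 mul0r.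
have e1 := z1 y; have e3 := z1 x; have e2 := z2 x; have e4 := z2 y.
rewrite Slin in e1; rewrite Slin in e2; rewrite Slin in e3; rewrite Slin in e4.
rewrite (Ssym _ _ sA) (Ssym _ _ sD) in e2.
rewrite (Ssym y x sD) in e3.
set a := Re w in e1 e2 e3 e4; set b := Im w in e1 e2 e3 e4 w0.
have hb : b * (Sf D x x + Sf D y y) = 0 by rewrite mulrDr; lra.
move/eqP: hb; rewrite mulf_eq0 (negPf w0) /= => /eqP hD.
have hA : Sf A x x + Sf A y y = 0.
  have : Sf A x x + Sf A y y + a * (Sf D x x + Sf D y y) = 0 by rewrite mulrDr; lra.
  by rewrite hD mulr0 addr0.
have nn v : 0 <= qf A v v.
  have [->|v0] := eqVneq v 0; first by rewrite qf0.
  exact: ltW (pA v v0).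
have hx : \col_k x k = 0 :> 'cV_n.
  apply/eqP; apply/negP => /negP hx0; have := pA _ hx0; rewrite -S_qf.
  have := nn (\col_k y k); rewrite -S_qf; lra.
have hy : \col_k y k = 0 :> 'cV_n.
  apply/eqP; apply/negP => /negP hy0; have := pA _ hy0; rewrite -S_qf.
  have := nn (\col_k x k); rewrite -S_qf; lra.
move/negP: u0; apply; apply/eqP/matrixP => i k; rewrite (ord1 i) [RHS]mxE.
have xk : x k = 0 by move/matrixP: hx => /(_ k 0); rewrite !mxE.
have yk : y k = 0 by move/matrixP: hy => /(_ k 0); rewrite !mxE.
move: xk yk; rewrite /x /y; case: (u 0 k) => c e /= -> ->; by [].
Qed.

End Pencil.

End Cplx.


Section Poly.
Variable R : realType.

Lemma prodlin (I : Type) (r : seq I) (b e : I -> R) :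
  (forall k, (size r < k)%N -> (\prod_(i <- r) ((b i)%:P + 'X * (e i)%:P))`_k = 0) /\
  (\prod_(i <- r) ((b i)%:P + 'X * (e i)%:P))`_(size r) = \prod_(i <- r) e i.
Proof.
elim: r => [|i r [IH1 IH2]].
  by rewrite !big_nil; split => [k k0|]; rewrite coef1 // ; case: k k0.
rewrite !big_cons /=; set Q := \prod_(j <- r) _.
have cf k : (((b i)%:P + 'X * (e i)%:P) * Q)`_k
    = b i * Q`_k + (if k == 0%N then 0 else e i * Q`_k.-1).
  rewrite mulrDl coefD coefCM -mulrA coefXM coefCM.
  by case: (k == 0%N).
split => [k kr|]; rewrite cf.
  rewrite IH1 ?(ltn_trans _ kr) // mulr0 add0r.
  case: k kr => // k kr /=; rewrite IH1 ?mulr0 //.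
by rewrite IH1 // mulr0 add0r /= IH2.
Qed.

Variable n : nat.
Implicit Types (B D : 'M[R]_n).

Definition penP B D : {poly R} :=
  \det (map_mx polyC B + 'X *: map_mx polyC D).

Lemma penP_horner B D t : (penP B D).[t] = \det (B + t *: D).
Proof.
rewrite /penP -horner_evalE -det_map_mx; congr (\det _); apply/matrixP => i j.
by rewrite !mxE /= horner_evalE hornerD hornerM hornerX !hornerC.
Qed.

Lemma penP_C B D (z : R[i]) :
  (map_poly (real_complex R) (penP B D)).[z] =
  \det (map_mx (real_complex R) B + z *: map_mx (real_complex R) D).
Proof.
rewrite /penP -det_map_mx -horner_evalE -det_map_mx; congr (\det _); apply/matrixP => i j.
rewrite !mxE /= horner_evalE rmorphD rmorphM /= !map_polyC map_polyX.
by rewrite hornerD hornerM hornerX !hornerC.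
Qed.

Lemma penP_size B D : \det D = 0 -> (size (penP B D) <= n)%N.
Proof.
move=> dD; apply/leq_sizeP => k kn.
have sz : size (index_enum 'I_n) = n by rewrite [index_enum _]unlock -enumT -cardT card_ord.
rewrite /penP /determinant coef_sum.
have ent (s : 'S_n) : \prod_i (map_mx polyC B + 'X *: map_mx polyC D) i (s i)
    = \prod_(i <- index_enum 'I_n) ((B i (s i))%:P + 'X * (D i (s i))%:P).
  by apply: eq_bigr => i _; rewrite !mxE.
have sgn (s : 'S_n) : ((-1) ^+ s : {poly R}) = ((-1) ^+ s)%:P.
  by rewrite rmorph_sign.
under eq_bigr => s _ do rewrite ent sgn coefCM.
move: kn; rewrite leq_eqVlt => /orP[/eqP <-|kn].
  rewrite -[RHS]dD /determinant; apply: eq_bigr => s _.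
  have [_ H2] := prodlin (index_enum 'I_n) (fun i => B i (s i)) (fun i => D i (s i)).
  by rewrite sz in H2; rewrite H2.
apply: big1 => s _.
have [H1 _] := prodlin (index_enum 'I_n) (fun i => B i (s i)) (fun i => D i (s i)).
by rewrite sz in H1; rewrite H1 // mulr0.
Qed.

End Poly.


Section Main.
Variable R : realType.
Variable n : nat.
Implicit Types (A B D : 'M[R]_n).

Lemma pd_det_gt0 A : pdm A -> 0 < \det A.
Proof.
move=> [sA pA].
have pdI : pdm (1%:M : 'M[R]_n).
  split; first by rewrite trmx1.
  move=> x x0; rewrite qf1 lt_def normsq_ge0 andbT.
  by apply: contra x0 => /eqP /normsq_eq0 ->.
have pds s : 0 <= s <= 1 -> pdm (1%:M + s *: (A - 1%:M)).
  move=> /andP[s0 s1]; split; first by apply: comb_sym => //; rewrite trmx1.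
  move=> x x0; rewrite qf_comb.
  have := pA x x0; have := pdI.2 x x0; have := normsq_ge0 x.
  rewrite -qf1 => h1 h2 h3.
  have [->|s1'] := eqVneq s 1; first by lra.
  have : 0 < 1 - s by rewrite subr_gt0 lt_def eq_sym s1' s1.
  nra.
rewrite ltNge; apply/negP => dA.
have := @poly_ivt R (- penP 1%:M (A - 1%:M)) 0 1 ler01.
rewrite !hornerN !penP_horner scale0r addr0 det1 scale1r addrC subrK.
rewrite oppr_le0 ler01 oppr_ge0 dA => /(_ isT) [x x01].
rewrite /root hornerN oppr_eq0 penP_horner.
by apply/negP; apply: pd_det; apply: pds.
Qed.

Local Notation Re := (@complex.Re R).
Local Notation Im := (@complex.Im R).

Lemma comb_eq B C u : (1 - u) *: B + u *: C = B + u *: (C - B).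
Proof. by apply/matrixP => i j; rewrite !mxE; ring. Qed.

Lemma concave_dir B C (a : R) : psdm B -> psdm C -> \det (C - B) = 0 -> 0 < a ->
  (n.-1)%:R * a <= 1 ->
  forall s t l, 0 <= s <= 1 -> 0 <= t <= 1 -> 0 <= l <= 1 ->
  (1 - l) * (\det ((1 - s) *: B + s *: C)) `^ a
    + l * (\det ((1 - t) *: B + t *: C)) `^ a
  <= (\det ((1 - ((1 - l) * s + l * t)) *: B + ((1 - l) * s + l * t) *: C)) `^ a.
Proof.
move=> pB pC dD a0 na s t l hs ht hl.
set D := C - B; set P := penP B D.
have PM u : \det ((1 - u) *: B + u *: C) = P.[u] by rewrite penP_horner comb_eq.
rewrite !PM.
set m := (1 - l) * s + l * t.
have hm : 0 <= m <= 1.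
  move: hs ht hl => /andP[? ?] /andP[? ?] /andP[? ?]; apply/andP; split; rewrite /m; nra.
have [[t0 [ht0 Pt0]] | none] := pselect (exists t0, 0 <= t0 <= 1 /\ P.[t0] != 0); last first.
  have z u : 0 <= u <= 1 -> P.[u] = 0.
    by move=> hu; apply/eqP; apply/negPn/negP => h; apply: none; exists u.
  by rewrite !z // powR0 ?gt_eqF // !mulr0 addr0.
set A := B + t0 *: D.
have psdA : psdm A by exact: psd_comb.
have PA : P.[t0] = \det A by rewrite penP_horner.
have pdA : pdm A by apply: psd_pd => //; rewrite -PA.
have sD : D^T = D by rewrite /D linearB /= pB.1 pC.1.
set PC := map_poly (real_complex R) P.
have [rs Hrs] := closed_field_poly_normal PC.
have rootz z : z \in rs -> PC.[z] = 0.
  move=> zr; rewrite Hrs hornerZ.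
  have /rootP -> : root (\prod_(x <- rs) ('X - x%:P)) z by rewrite root_prod_XsubC.
  by rewrite mulr0.
have Imz z : z \in rs -> Im z = 0.
  move=> zr; apply/eqP; apply/negPn/negP => nz.
  have hI : Im (z - t0%:C%C) != 0 by case: z nz {zr} => x y /=; rewrite subr0.
  have := pencil_real pdA sD hI; rewrite -(rootz z zr) /PC penP_C.
  suff -> : map_mx (real_complex R) B + z *: map_mx (real_complex R) D
    = map_mx (real_complex R) A + (z - t0%:C%C) *: map_mx (real_complex R) D.
    by rewrite eqxx.
  apply/matrixP => i j; rewrite !mxE !(rmorphD, rmorphM, rmorphB, rmorphN) /=; ring.
have Pfac u : P.[u] = lead_coef P * \prod_(z <- rs) (u - Re z).
  apply: (@complexI R); rewrite -horner_map -/PC {1}Hrs hornerZ horner_prod.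
  rewrite lead_coef_map rmorphM rmorph_prod /=; congr (_ * _).
  apply: eq_big_seq => z zr; rewrite hornerXsubC rmorphB /=.
  by case: z zr (Imz z zr) => x y _ /= ->.
have Pne0 : P != 0 by apply: contra Pt0 => /eqP ->; rewrite horner0.
have lc0 : lead_coef P != 0 by rewrite lead_coef_eq0.
have szrs : ((size rs).+1 <= n)%N.
  have <- : size PC = (size rs).+1.
    rewrite Hrs size_scale ?size_prod_XsubC //.
    by rewrite lead_coef_map fmorph_eq0.
  by rewrite size_map_poly penP_size.
have nroot z : z \in rs -> ~~ (0 < Re z < 1).
  move=> zr; apply/negP => /andP[r0 r1].
  have Pr : P.[Re z] = 0.
    rewrite Pfac; apply/eqP; rewrite mulf_eq0 prodf_seq_eq0; apply/orP; right.
    by apply/hasP; exists z => //; rewrite /= subrr eqxx.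
  rewrite penP_horner in Pr.
  have [x x0 Mx] := det0_ker Pr.
  have qM : qf (B + Re z *: D) x x = 0 by rewrite /qf -mulmxA Mx mulmx0 mxE.
  rewrite qf_comb in qM.
  have qB0 := pB.2 x; have qC0 := pC.2 x.
  have h1 : 0 <= (1 - Re z) * qf B x x by rewrite mulr_ge0 // subr_ge0 ltW.
  have h2 : 0 <= Re z * qf C x x by rewrite mulr_ge0 // ltW.
  have qB : qf B x x = 0.
    have : (1 - Re z) * qf B x x = 0 by lra.
    by move/eqP; rewrite mulf_eq0 subr_eq0 (gt_eqF r1) => /eqP.
  have qC : qf C x x = 0.
    have : Re z * qf C x x = 0 by lra.
    by move/eqP; rewrite mulf_eq0 (gt_eqF r0) => /eqP.
  have Bx := psd_ker pB qB; have Cx := psd_ker pC qC.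
  have Ax : A *m x = 0 by rewrite /A /D mulmxDl -scalemxAl mulmxBl Bx Cx subrr scaler0 addr0.
  by move: Pt0; rewrite PA (ker_det0 x0 Ax) eqxx.
pose sg z : R := if Re z <= 0 then 1 else -1.
pose ell z u : R := if 0 < Re z < 1 then 1 else sg z * (u - Re z).
have ell0 z u : 0 <= u <= 1 -> 0 <= ell z u.
  move=> /andP[u0 u1]; rewrite /ell /sg; case: ifP => // /negbT h.
  case: ifP => hz; first by rewrite mul1r; lra.
  move/negbT: hz; rewrite -ltNge => hz; move: h; rewrite hz /= -leNgt => hz1.
  lra.
have ellaff z : (1 - l) * ell z s + l * ell z t = ell z m.
  by rewrite /ell /m; case: ifP => _; ring.
set c := lead_coef P * \prod_(z <- rs) sg z.
have Pfac2 u : P.[u] = c * \prod_(z <- rs) ell z u.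
  rewrite Pfac /c -mulrA -big_split; congr (_ * _); apply: eq_big_seq => z zr /=.
  rewrite /ell (negPf (nroot z zr)) mulrA.
  suff -> : sg z * sg z = 1 by rewrite mul1r.
  by rewrite /sg; case: ifP => _; rewrite ?mulr1 ?mulrNN ?mulr1.
have L0 u : 0 <= u <= 1 -> 0 <= \prod_(z <- rs) ell z u.
  by move=> hu; apply: prodr_ge0 => z _; exact: ell0.
have c0 : 0 < c.
  have := pd_det_gt0 pdA; rewrite -PA Pfac2.
  have := L0 t0 ht0; nra.
clearbody c.
rewrite !Pfac2 !powRM ?(ltW c0) ?L0 //.
rewrite !powR_prod; try by move=> z; apply: ell0.
have sza : (size rs)%:R * a <= 1.
  apply: le_trans na; apply: ler_wpM2r; first exact: ltW.
  rewrite ler_nat; case: n szrs => // k /=; by rewrite ltnS.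
have Hh := @holder R _ rs (fun z => ell z s) (fun z => ell z t) a l (fun z => ell0 z s hs) (fun z => ell0 z t ht) a0 sza hl.
have -> : \prod_(z <- rs) ell z m `^ a
         = \prod_(z <- rs) ((1 - l) * ell z s + l * ell z t) `^ a.
  by apply: eq_bigr => z _; rewrite ellaff.
rewrite mulrCA [l * (_ * _)]mulrCA -mulrDr.
by apply: ler_wpM2l; first exact: powR_ge0.
Qed.

End Main.

Section Conv.
Variable R : realType.
Variable k : nat.
Local Notation d := k.+2.

Lemma psd_diag (r : 'rV[R]_d) : (forall j, 0 <= r 0 j) -> psdm (diag_mx r).
Proof.
move=> r0; split; first exact: tr_diag_mx.
move=> v; rewrite /qf mul_mx_diag mxE; apply: sumr_ge0 => i _; rewrite !mxE.
rewrite mulrAC -expr2; apply: mulr_ge0 => //; exact: sqr_ge0.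
Qed.

Definition Bm : 'M[R]_d := diag_mx (\row_j ((j == ord0)%:R)).

Lemma det_comb (t : R) : \det ((1 - t) *: Bm + t *: 1%:M) = t ^+ k.+1.
Proof.
have -> : (1 - t) *: Bm + t *: 1%:M = diag_mx (\row_j (if j == ord0 then 1 else t)).
  apply/matrixP => i j; rewrite !mxE; case: (i =P j) => [_|_]; last by rewrite !mulr0n; ring.
  by case: (i == ord0); rewrite /= ?mulr1n ?mulr0n; ring.
rewrite det_diag big_ord_recl !mxE eqxx mul1r.
rewrite (eq_bigr (fun _ => t)); first by rewrite prodr_const card_ord.
by move=> i _; rewrite !mxE.
Qed.

Lemma det_CB : \det (1%:M - Bm) = 0.
Proof.
have -> : (1%:M - Bm) = diag_mx (\row_j ((j != ord0)%:R)) :> 'M[R]_d.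
  apply/matrixP => i j; rewrite !mxE; case: (i =P j) => [_|_]; last by rewrite !mulr0n subr0.
  by case: (i == ord0); rewrite /= ?mulr1n ?mulr0n ?subrr ?subr0.
by rewrite det_diag big_ord_recl !mxE eqxx mul0r.
Qed.

Lemma converse_dir (a : R) : 0 < a ->
  (forall s t l : R, 0 <= s <= 1 -> 0 <= t <= 1 -> 0 <= l <= 1 ->
    (1 - l) * (\det ((1 - s) *: Bm + s *: 1%:M)) `^ a
    + l * (\det ((1 - t) *: Bm + t *: 1%:M)) `^ a
    <= (\det ((1 - ((1 - l) * s + l * t)) *: Bm + ((1 - l) * s + l * t) *: 1%:M)) `^ a) ->
  a <= (k.+1)%:R^-1.
Proof.
move=> a0 H.
have h2 : 0 <= (2^-1 : R) <= 1.
  apply/andP; split; [rewrite invr_ge0 | rewrite invf_le1]; lra.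
have := H 0 1 2^-1 (ltac:(by rewrite lexx ler01)) (ltac:(by rewrite lexx ler01)) h2.
rewrite !det_comb mulr0 add0r mulr1 expr0n /= expr1n powR0 ?gt_eqF // powR1 mulr0 add0r mulr1.
rewrite -powR_mulrn ?invr_ge0 ?ler0n // -powRrM.
set b := _ * a.
move=> Hi; rewrite leNgt; apply/negP => ha; move: Hi.
have b1 : 1 < b.
  have kp : 0 < (k.+1)%:R :> R by rewrite ltr0n.
  by have h := ha; rewrite -(ltr_pM2l kp) mulfV ?gt_eqF // in h.
have hb : 0 < b - 1 by rewrite subr_gt0.
have hh : 0 < 2^-1 :> R by rewrite invr_gt0; lra.
rewrite -(mulr_powRB1 (ltW hh) (lt_trans ltr01 b1)) => H2.
have : (2^-1) `^ (b - 1) < 1 `^ (b - 1).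
  apply: gt0_ltr_powR => //; rewrite ?nnegrE ?(ltW hh) //; rewrite invf_lt1; lra.
rewrite powR1 => H3.
have : 2^-1 * 2^-1 `^ (b - 1) < 2^-1 * 1 by rewrite ltr_pM2l.
lra.
Qed.

End Conv.


Theorem proposition1p2 (R : realType) (d : nat) (alpha : R) :
  (2 <= d)%N -> 0 < alpha ->
  (Lambda_concave (@F_alpha R d alpha) <-> alpha <= (d.-1)%:R^-1).
Proof.
case: d => [|[|k]] // _ a0; split.
- move=> HL; apply: (converse_dir a0) => s t l hs ht hl.
  have pB : psd (Bm R k).
    apply: (psd_diag (r := \row_j ((j == ord0)%:R))) => j.
    by rewrite mxE ler0n.
  have p1 : psd (1%:M : 'M[R]_k.+2).
    by split; [rewrite trmx1 | move=> v; rewrite -/(qf _ _ _) qf1 normsq_ge0].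
  exact: (HL _ _ pB p1 (@det_CB R k) s t l hs ht hl).
- move=> ha B C pB pC dCB s t l hs ht hl.
  apply: (concave_dir pB pC dCB a0 _ hs ht hl) => /=.
  have := ler_wpM2l (ler0n R k.+1) ha; rewrite mulfV // pnatr_eq0.
Qed.
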